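(* Let $X$ be a compact metric space, $Y\subset[-1,1]$ compact, $H$ an RKHS of continuous functions on $X$ with closed unit ball $B_H$ and $\|f\|_\infty\le\|f\|_H$ for all $f\in H$, and $L:Y\times\mathbb R\to[0,\infty)$ continuous, convex in its second variable, satisfying for constants $\alpha\in[1,2]$, $c_L>0$: $\sup_{y\in Y}L(y,t)\le1+|t|^\alpha$ for all $t\in\mathbb R$ and $\sup_{y\in Y}|L(y,\cdot)|_{[-t,t]}|_1\le c_Lt^{\alpha-1}$ for all $t\ge0$. Let $P$ be a distribution on $X\times Y$ for which a minimizer $f^*_{L,P}$ of the $L$-risk exists, and suppose there are constants $v\ge0$, $c\ge1$, $\vartheta\in[0,1]$ and some $0<\lambda<1$ such that for all $f\in\lambda^{-1/2}B_H$ $$\mathbb E_P(L\circ f-L\circ f^*_{L,P})^2\le c(\|f\|_\infty+1)^v\big(\mathbb E_P(L\circ f-L\circ f^*_{L,P})\big)^\vartheta.$$ Then for all $g\in\mathcal G(\lambda)$ $$\mathbb E_Pg^2\le16c\Big(\Big(\frac{\mathbb E_Pg}{\lambda}\Big)^{1/2}+\Big(\frac{a(\lambda)}{\lambda}\Big)^{1/2}+1\Big)^v\Big((\mathbb E_Pg)^\vartheta+2a^\vartheta(\lambda)\Big).$$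
   Context: $|h|_1$ is the Lipschitz constant of $h$; $L\circ f$ denotes $(x,y)\mapsto L(y,f(x))$; $\mathcal R_{L,P}(f):=\mathbb E_PL\circ f$, $\mathcal R^*_{L,P}:=\inf\{\mathcal R_{L,P}(f):f\text{ measurable}\}$, attained by $f^*_{L,P}$. For $\lambda>0$, $f_{P,\lambda}:=\arg\min_{f\in H}(\lambda\|f\|_H^2+\mathcal R_{L,P}(f))$ and $a(\lambda):=\lambda\|f_{P,\lambda}\|_H^2+\mathcal R_{L,P}(f_{P,\lambda})-\mathcal R^*_{L,P}$; $a^\vartheta(\lambda)$ means $(a(\lambda))^\vartheta$, with $0^0:=1$. $C_\lambda(x,y,f):=\lambda\|f\|_H^2+L(y,f(x))$, $C_\lambda\circ f:=C_\lambda(\cdot,\cdot,f)$, and $\mathcal G(\lambda):=\{C_\lambda\circ f-C_\lambda\circ f_{P,\lambda}: f\in\lambda^{-1/2}B_H\}$. *)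

(* Defs.v *)
From HB Require Import structures.
From mathcomp Require Import all_boot all_order all_algebra.
From mathcomp Require Import all_classical all_reals all_analysis.
Set Implicit Arguments. Unset Strict Implicit. Unset Printing Implicit Defensive.
Import Order.TTheory GRing.Theory Num.Theory.
Import numFieldNormedType.Exports.
Local Open Scope classical_set_scope.
Local Open Scope ring_scope.

Section Defs.
Variables (R : realType) (X : pseudoPMetricType R).

Definition BX := g_sigma_algebraType (@open X).

Definition normH (ip : (X -> R) -> (X -> R) -> R) (f : X -> R) : R :=
  Num.sqrt (ip f f).

(* H is a reproducing kernel Hilbert space of functions on X with inner
   product ip (restricted to H): a real inner-product space of functions,
   complete for the induced norm, on which every point evaluation is a
   bounded (= continuous) linear functional. *)
Definition is_RKHS (H : set (X -> R)) (ip : (X -> R) -> (X -> R) -> R) : Prop :=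
  [/\ H (fun=> 0),
      (forall f g, H f -> H g -> H (fun x => f x + g x)),
      (forall (a : R) f, H f -> H (fun x => a * f x)),
      (forall f g, H f -> H g -> ip f g = ip g f)
    & (forall (a : R) f g h, H f -> H g -> H h ->
          ip (fun x => a * f x + g x) h = a * ip f h + ip g h)] /\
  [/\ (forall f, H f -> 0 <= ip f f),
      (forall f, H f -> ip f f = 0 -> f = fun=> 0),
      (forall u : nat -> X -> R, (forall n, H (u n)) ->
        (forall e : R, 0 < e -> exists N, forall m n, (N <= m)%N -> (N <= n)%N ->
             normH ip (fun x => u m x - u n x) < e) ->
        exists2 f, H f & forall e : R, 0 < e -> exists N, forall n, (N <= n)%N ->
             normH ip (fun x => u n x - f x) < e)
    & (forall x : X, exists C : R, forall f, H f -> `|f x| <= C * normH ip f)].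

Definition supnorm (f : X -> R) : R := sup [set `|f x| | x in [set: X]].

Section risk.
Variables (Y : set R) (L : R -> R -> R) (P : probability (BX * R)%type R).

(* E_P h for h on X x Y (P is concentrated on X x Y) *)
Definition Ex (h : BX * R -> R) : \bar R :=
  (\int[P]_(z in [set: BX] `*` Y) (h z)%:E)%E.

Definition Lcomp (f : X -> R) : BX * R -> R := fun z => L z.2 (f z.1).

Definition risk (f : X -> R) : \bar R := Ex (Lcomp f).

Definition bayes_risk : \bar R :=
  ereal_inf [set risk f | f in [set f : BX -> R | measurable_fun [set: BX] f]].

Variables (H : set (X -> R)) (ip : (X -> R) -> (X -> R) -> R) (lam : R).

Definition reg_risk (f : X -> R) : \bar R :=
  ((lam * normH ip f ^+ 2)%:E + risk f)%E.

Definition fPlam : X -> R :=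
  xget (fun=> 0) [set f | H f /\ forall g, H g -> (reg_risk f <= reg_risk g)%E].

Definition approx_err : \bar R := (reg_risk fPlam - bayes_risk)%E.

Definition Ccomp (f : X -> R) : BX * R -> R :=
  fun z => lam * normH ip f ^+ 2 + L z.2 (f z.1).

Definition Gset : set (BX * R -> R) :=
  [set g | exists2 f, H f /\ normH ip f <= (Num.sqrt lam)^-1 &
           g = (fun z => Ccomp f z - Ccomp fPlam z)].
End risk.
End Defs.

(* Main.v *)
Require Import Defs.
From HB Require Import structures.
From mathcomp Require Import all_boot all_order all_algebra.
From mathcomp Require Import all_classical all_reals all_analysis.
From mathcomp Require Import measurable_realfun lra ring.
Import Order.TTheory GRing.Theory Num.Theory.
Import numFieldNormedType.Exports.
Local Open Scope classical_set_scope.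
Local Open Scope ring_scope.
Lemma supnorm_bd {R : realType} {X : pseudoPMetricType R} (f : X -> R) :
  compact [set: X] -> continuous f ->
  (forall x, `|f x| <= supnorm f) /\ 0 <= supnorm f.
Proof.
move=> cX cf.
have cpt : compact (f @` [set: X]).
  by apply: continuous_compact => //; exact: continuous_subspaceT.
have [M [_ HM]] := compact_bounded cpt.
have ub : has_ubound [set `|f x| | x in [set: X]].
  exists (M + 1) => _ [x _ <-].
  have M1 : M < M + 1 by rewrite ltrDl ltr01.
  have := HM (M + 1) M1 (f x); rewrite /= => H1; apply: H1.
  by exists x.
have h x : `|f x| <= supnorm f by apply: ub_le_sup => //; exists x.
split => //; exact: le_trans (normr_ge0 _) (h point).
Qed.
Lemma cont_slice (R : realType) (Y : set R) (L : R -> R -> R) (c : R) :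
  {within Y `*` [set: R], continuous (fun p : R * R => L p.1 p.2)} ->
  {within Y, continuous (fun y => L y c)}.
Proof.
move=> LC; apply/subspace_continuousP => y Yy.
have := (subspace_continuousP _ _).1 LC (y, c) (conj Yy I).
move=> H W /= hW.
have Hn := H W hW.
have Hc : (fun x : R => (x, c)) @ nbhs y --> (y, c).
  exact: (cvg_pair cvg_id (cvg_cst c)).
have := Hc _ Hn.
rewrite /within /=.
move=> Hp. exact: (filterS (fun x Hx Yx => Hx (conj Yx I)) Hp).
Qed.
Lemma piecewise_meas d (T : measurableType d) (R : realType) (D : set T)
  (A : int -> set T) (phi : T -> R) (psi : int -> T -> R) :
  measurable D -> (forall k, measurable (D `&` A k)) ->
  (forall z, D z -> exists k, A k z) ->
  (forall k z, D z -> A k z -> phi z = psi k z) ->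
  (forall k, measurable_fun D (psi k)) -> measurable_fun D phi.
Proof.
move=> mD mA cov eq mpsi _ B mB.
have -> : D `&` phi @^-1` B =
    \bigcup_k ((D `&` A k) `&` (D `&` psi k @^-1` B)).
  apply/seteqP; split => z.
    move=> [Dz Bz]; have [k Ak] := cov z Dz.
    by exists k => //; split => //; split => //; rewrite /preimage /= -(eq k z).
  by move=> [k _ [[Dz Ak] [_ Bz]]]; split => //; rewrite /preimage /= (eq k z).
apply: countable_bigcupT_measurable; first exact: countableP.
by move=> k; apply: measurableI; [exact: mA | exact: mpsi].
Qed.

Lemma floor_approx (R : realType) (t m : R) : 0 < m ->
  `|(Num.floor (t * m))%:~R / m - t| <= m^-1.
Proof.
move=> m0; have /andP[h1 h2] := floor_itv (t * m).
set k : R := (Num.floor (t * m))%:~R in h1 h2 *.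
have e : k / m - t = (k - t * m) / m by field; rewrite gt_eqF.
have mi : 0 <= m^-1 by rewrite invr_ge0 ltW.
rewrite e normrM [`|m^-1|]ger0_norm //.
rewrite -[leRHS]mul1r; apply: ler_wpM2r => //.
rewrite intrD in h2.
by rewrite ler_norml; apply/andP; split; lra.
Qed.

Lemma meas_L (R : realType) d (T : measurableType d) (D : set T)
  (Y : set R) (s w : T -> R) (L : R -> R -> R) (K : R -> R) :
  measurable D -> measurable_fun D w ->
  (forall c, measurable_fun D (fun z => L (s z) c)) ->
  (forall z, D z -> Y (s z)) ->
  (forall t, 0 <= K t) ->
  (forall t y q, Y y -> `|q - t| <= 1 -> `|L y q - L y t| <= K t * `|q - t|) ->
  measurable_fun D (fun z => L (s z) (w z)).
Proof.
move=> mD mw mc Ys K0 Lip.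
pose m (n : nat) : R := n.+1%:R.
have m0 n : 0 < m n by rewrite /m ltr0n.
pose h (n : nat) z := L (s z) ((Num.floor (w z * m n))%:~R / m n).
apply: (measurable_fun_cvg (h := h)).
- move=> n.
  apply: (@piecewise_meas _ _ _ _ (fun k => (fun z => w z * m n) @^-1` `[k%:~R, (k+1)%:~R[) _
           (fun k z => L (s z) (k%:~R / m n))) => //.
  + move=> k; exact: (measurable_funM mw (measurable_cst (m n)) mD (measurable_itv `[k%:~R, (k+1)%:~R[)).
  + move=> z _; exists (Num.floor (w z * m n)).
    by rewrite /preimage /= in_itv /= floor_itv.
  + move=> k z _; rewrite /preimage /= in_itv /= => /floor_def.
    by rewrite /h => ->.
- move=> z Dz; apply/cvgrPdist_le => e e0.
  exists (Num.truncn (K (w z) / e)) => // n /= Nn.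
  have hb := @floor_approx _ (w z) _ (m0 n).
  have m1 : (m n)^-1 <= 1 by rewrite invr_le1 // ?unitfE ?gt_eqF // /m ler1n.
  rewrite distrC; apply: le_trans (Lip _ _ _ (Ys z Dz) (le_trans hb m1)) _.
  apply: le_trans (ler_wpM2l (K0 _) hb) _.
  rewrite ler_pdivrMr //.
  rewrite -ler_pdivrMl //.
  by move: Nn; rewrite truncn_le_nat mulrC => /ltW.
Qed.
Lemma le_powR_self {R : realType} (a th : R) : 0 <= a <= 1 -> th <= 1 -> a <= powR a th.
Proof.
move=> /andP[a0 a1] th1; have [->|an0] := eqVneq a 0; first exact: powR_ge0.
by apply: ger1_powR => //; rewrite a1 andbT lt_neqAle eq_sym an0.
Qed.

Lemma powR_mono {R : realType} (a b th : R) : 0 <= th -> 0 <= a -> a <= b ->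
  powR a th <= powR b th.
Proof.
move=> th0 a0 ab; apply: (ge0_ler_powR th0) => //; rewrite nnegrE //.
exact: le_trans ab.
Qed.

Lemma powR_subadd {R : realType} (p q th : R) : 0 <= th <= 1 -> 0 <= p -> 0 <= q ->
  powR (p + q) th <= powR p th + powR q th.
Proof.
move=> /andP[th0 th1] p0 q0.
have [s0|s0] := eqVneq (p + q) 0.
  have p00 : p = 0 by lra.
  have q00 : q = 0 by lra.
  by rewrite s0 p00 q00 -[leLHS]addr0 lerD // powR_ge0.
have sp : 0 < p + q by rewrite lt_neqAle eq_sym s0 addr_ge0.
set s := p + q.
have ep : p = s * (p / s) by field; rewrite gt_eqF.
have eq' : q = s * (q / s) by field; rewrite gt_eqF.
have s0' : 0 <= s := ltW sp.
rewrite [in powR p _]ep [in powR q _]eq' (powRM _ s0' (divr_ge0 p0 s0')).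
rewrite (powRM _ s0' (divr_ge0 q0 s0')).
rewrite -mulrDr -[leLHS]mulr1; apply: ler_wpM2l; first exact: powR_ge0.
have h1 : p / s <= powR (p / s) th.
  apply: le_powR_self => //; rewrite divr_ge0 //= ler_pdivrMr // mul1r.
  by rewrite /s lerDl.
have h2 : q / s <= powR (q / s) th.
  apply: le_powR_self => //; rewrite divr_ge0 //= ler_pdivrMr // mul1r.
  by rewrite /s lerDr.
have : p / s + q / s = 1 by rewrite -mulrDl divff // gt_eqF.
lra.
Qed.

Lemma powR_keybd {R : realType} (y e a th : R) : 0 <= th <= 1 -> 0 <= a ->
  0 <= y -> y <= e + a -> powR y th <= powR e th + powR a th.
Proof.
move=> thb a0 y0 ye; have th0 : 0 <= th by case/andP: thb.
have [e0|e0] := leP 0 e.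
  exact: (le_trans (@powR_mono _ y (e+a) th th0 y0 ye) (@powR_subadd _ e a th thb e0 a0)).
have ya : y <= a by lra.
apply: (le_trans (@powR_mono _ y a th th0 y0 ya)).
by rewrite lerDr powR_ge0.
Qed.

Lemma final_ineq {R : realType} (x x0 r r0 rs s s0 lam c v th E1 E2 : R) :
  0 < lam -> 1 <= c -> 0 <= v -> 0 <= th <= 1 ->
  0 <= x <= 1 -> 0 <= x0 <= 1 -> rs <= r -> rs <= r0 ->
  0 <= s -> s <= Num.sqrt (x / lam) -> 0 <= s0 -> s0 <= Num.sqrt (x0 / lam) ->
  E1 <= c * powR (s + 1) v * powR (r - rs) th ->
  E2 <= c * powR (s0 + 1) v * powR (r0 - rs) th ->
  2 * (x - x0) ^+ 2 + 4 * E1 + 4 * E2 <=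
  16 * c * powR (powR ((x - x0 + (r - r0)) / lam) (2^-1)
                 + powR ((x0 + r0 - rs) / lam) (2^-1) + 1) v *
   (powR (x - x0 + (r - r0)) th + 2 * powR (x0 + r0 - rs) th).
Proof.
move=> lam0 c1 v0 thb /andP[x0' x1] /andP[x00 x01] rsr rsr0 s0' sx s00 sx0 hE1 hE2.
have th0 : 0 <= th by case/andP: thb.
set e := x - x0 + (r - r0).
set a := x0 + r0 - rs.
set T := powR e th; set pa := powR a th.
have a0 : 0 <= a by rewrite /a; lra.
have T0 : 0 <= T := powR_ge0 _ _.
have pa0 : 0 <= pa := powR_ge0 _ _.
have hA : powR (r - rs) th <= T + pa.
  apply: powR_keybd => //; rewrite /e /a; lra.
have hA0 : powR (r0 - rs) th <= pa.
  apply: powR_mono => //; rewrite /a; lra.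
have hx : x ^+ 2 <= T + pa.
  have : x <= powR x th by apply: le_powR_self; [by rewrite x0' x1 | by case/andP: thb].
  have : powR x th <= T + pa by apply: powR_keybd => //; rewrite /e /a; lra.
  have : x ^+ 2 <= x by rewrite expr2 ler_piMl.
  lra.
have hx0 : x0 ^+ 2 <= pa.
  have : x0 <= powR x0 th by apply: le_powR_self; [by rewrite x00 x01 | by case/andP: thb].
  have : powR x0 th <= pa by apply: powR_mono => //; rewrite /a; lra.
  have : x0 ^+ 2 <= x0 by rewrite expr2 ler_piMl.
  lra.
have li : 0 < lam^-1 by rewrite invr_gt0.
have hb : (0 <= (2^-1 : R) <= 1) by rewrite invr_ge0 ler0n /= invr_le1 ?unitfE // ler1n.
set B := powR (e / lam) (2^-1) + powR (a / lam) (2^-1) + 1.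
have pe0 : 0 <= powR (e / lam) (2^-1) := powR_ge0 _ _.
have pa0' : 0 <= powR (a / lam) (2^-1) := powR_ge0 _ _.
have hs : s + 1 <= B.
  rewrite /B lerD2r; apply: (le_trans sx).
  rewrite -powR12_sqrt; last by rewrite divr_ge0 // ltW.
  apply: powR_keybd => //; first by rewrite divr_ge0 // ltW.
    by rewrite divr_ge0 // ltW.
  rewrite -mulrDl ler_wpM2r //; [exact: ltW | rewrite /e /a; lra].
have hs0 : s0 + 1 <= B.
  rewrite /B lerD2r; apply: (le_trans sx0).
  rewrite -powR12_sqrt; last by rewrite divr_ge0 // ltW.
  have : powR (x0 / lam) (2^-1) <= powR (a / lam) (2^-1).
    apply: powR_mono; first by case/andP: hb.
      by rewrite divr_ge0 // ltW.
    rewrite ler_wpM2r //; [exact: ltW | rewrite /a; lra].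
  lra.
set PB := powR B v.
have PB1 : 1 <= PB.
  have -> : 1 = powR 1 v by rewrite powR1.
  rewrite /PB; apply: powR_mono => //.
  lra.
have P1 : powR (s + 1) v <= PB by apply: powR_mono => //; lra.
have P2 : powR (s0 + 1) v <= PB by apply: powR_mono => //; lra.
have W1 : 1 <= c * PB by rewrite -[1]mulr1 ler_pM.
have hE1' : E1 <= c * PB * (T + pa).
  apply: (le_trans hE1); apply: ler_pM.
  - by rewrite mulr_ge0 ?powR_ge0 //; lra.
  - exact: powR_ge0.
  - by rewrite ler_pM // ?powR_ge0 //; lra.
  - exact: hA.
have hE2' : E2 <= c * PB * pa.
  apply: (le_trans hE2); apply: ler_pM.
  - by rewrite mulr_ge0 ?powR_ge0 //; lra.
  - exact: powR_ge0.
  - by rewrite ler_pM // ?powR_ge0 //; lra.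
  - exact: hA0.
have hd : (x - x0) ^+ 2 <= x ^+ 2 + x0 ^+ 2.
  have : 0 <= x * x0 by rewrite mulr_ge0.
  rewrite !expr2; lra.
have hW : T + 2 * pa <= c * PB * (T + 2 * pa).
  by rewrite -[leLHS]mul1r ler_wpM2r //; lra.
rewrite -/T -/pa -/B -/PB.
have -> : 16 * c * PB * (T + 2 * pa) = 16 * (c * PB * (T + 2 * pa)) by ring.
set W := c * PB in hE1' hE2' hW *.
have : W * (T + pa) + W * pa = W * (T + 2 * pa) by ring.
lra.
Qed.
Lemma cont_meas (R : realType) (X : pseudoPMetricType R) (f : X -> R) :
  continuous f -> measurable_fun [set: BX X] (f : BX X -> R).
Proof.
move=> cf; apply: (measurability _ (measurable_realfun.RGenOpens.measurableE R)).
move=> _ [_ [a [b ->]] <-]; rewrite setTI.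
apply: sub_sigma_algebra.
apply: (continuousP _).1 => //.
Qed.

Lemma norm_conv {R : realType} (lam n : R) : 0 < lam -> 0 <= n ->
  (n <= (Num.sqrt lam)^-1) = (lam * n ^+ 2 <= 1).
Proof.
move=> l0 n0; have sl : 0 < Num.sqrt lam by rewrite sqrtr_gt0.
rewrite -(ler_pM2r sl) mulVf ?gt_eqF //.
have -> : lam * n ^+ 2 = (n * Num.sqrt lam) ^+ 2.
  by rewrite exprMn sqr_sqrtr ?ltW // mulrC.
by rewrite expr_le1 // mulr_ge0 // ltW.
Qed.

Section int_helpers.
Context {d : measure_display} {T : measurableType d} {R : realType}
  (mu : {measure set T -> \bar R}) (D : set T) (mD : measurable D).

Lemma int_addR (u1 u2 : T -> R) :
  (forall z, D z -> 0 <= u1 z) -> measurable_fun D u1 ->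
  (forall z, D z -> 0 <= u2 z) -> measurable_fun D u2 ->
  (\int[mu]_(z in D) (u1 z + u2 z)%:E =
   \int[mu]_(z in D) (u1 z)%:E + \int[mu]_(z in D) (u2 z)%:E)%E.
Proof.
move=> u10 mu1 u20 mu2.
under eq_integral do rewrite EFinD.
apply: ge0_integralD => //.
all: first [exact/measurable_EFinP | by move=> z Dz; rewrite lee_fin ?u10 ?u20].
Qed.

Lemma int_scaleR (k : R) (u : T -> R) : 0 <= k ->
  (forall z, D z -> 0 <= u z) -> measurable_fun D u ->
  (\int[mu]_(z in D) (k * u z)%:E = k%:E * \int[mu]_(z in D) (u z)%:E)%E.
Proof.
move=> k0 u0 mu0.
under eq_integral do rewrite EFinM.
apply: ge0_integralZl => //.
all: first [exact/measurable_EFinP | by move=> z Dz; rewrite lee_fin ?u0].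
Qed.
End int_helpers.

Theorem lemma4p2 (R : realType) (X : pseudoPMetricType R)
  (X_metric : hausdorff_space X) (X_compact : compact [set: X])
  (Y : set R) (Y_compact : compact Y) (Y_sub : Y `<=` `[-1, 1])
  (H : set (X -> R)) (ip : (X -> R) -> (X -> R) -> R)
  (H_RKHS : is_RKHS H ip) (H_cont : forall f, H f -> continuous f)
  (H_sup : forall f, H f -> supnorm f <= normH ip f)
  (L : R -> R -> R) (alpha cL : R)
  (alpha_bd : 1 <= alpha <= 2) (cL_gt0 : 0 < cL)
  (L_ge0 : forall y t, Y y -> 0 <= L y t)
  (L_cont : {within Y `*` [set: R], continuous (fun p : R * R => L p.1 p.2)})
  (L_convex : forall y, Y y -> forall (s t a : R), 0 <= a <= 1 ->
      L y (a * s + (1 - a) * t) <= a * L y s + (1 - a) * L y t)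
  (L_growth : forall t y : R, Y y -> L y t <= 1 + powR `|t| alpha)
  (L_lip : forall t : R, 0 <= t -> forall y, Y y -> forall s1 s2,
      `|s1| <= t -> `|s2| <= t ->
      `|L y s1 - L y s2| <= cL * powR t (alpha - 1) * `|s1 - s2|)
  (P : probability (BX X * R)%type R)
  (P_XY : P ([set: BX X] `*` Y) = 1%E)
  (fstar : BX X -> R) (fstar_meas : measurable_fun [set: BX X] fstar)
  (fstar_min : risk Y L P fstar = bayes_risk Y L P)
  (v c theta lam : R)
  (v_ge0 : 0 <= v) (c_ge1 : 1 <= c) (theta_bd : 0 <= theta <= 1)
  (lam_bd : 0 < lam < 1)
  (variance_bd : forall f, H f -> normH ip f <= (Num.sqrt lam)^-1 ->
     (Ex Y P (fun z => ((Lcomp L f z - Lcomp L fstar z) ^+ 2)%R)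
      <= (c * powR (supnorm f + 1) v)%:E *
         poweR (Ex Y P (fun z => (Lcomp L f z - Lcomp L fstar z)%R)) theta)%E) :
  forall g, Gset Y L P H ip lam g ->
    (Ex Y P (fun z => (g z ^+ 2)%R)
     <= (16 * c)%:E *
        poweR (poweR (Ex Y P g * (lam^-1)%:E) (2^-1)
               + poweR (approx_err Y L P H ip lam * (lam^-1)%:E) (2^-1) + 1) v *
        (poweR (Ex Y P g) theta
         + 2%:E * poweR (approx_err Y L P H ip lam) theta))%E.
Proof.
move=> g [f [Hf nf] ->].
set D := [set: BX X] `*` Y.
have mY : measurable Y := compact_measurable Y_compact.
have mD : measurable D by apply: measurableX.
have PD : P D = 1%E := P_XY.
have [[H0 Hadd Hscal Hsym Hlin] [Hpos Hdef Hcompl Heval]] := H_RKHS.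
have mfH : forall f, H f -> measurable_fun [set: BX X] (f : BX X -> R).
  by move=> f' Hf'; apply: cont_meas; exact: H_cont.
have mLc : forall c, measurable_fun D (fun z : BX X * R => L z.2 c).
  move=> c0.
  apply: (measurable_comp (F := Y) (f := fun y => L y c0) (g := snd)) => //.
  - by move=> _ [z [_ Yz] <-].
  - apply: subspace_continuous_measurable_fun => //.
    exact: cont_slice.
  - exact: measurable_funS measurable_snd.
have mL : forall w : BX X -> R, measurable_fun [set: BX X] w ->
    measurable_fun D (Lcomp L w).
  move=> w mw.
  apply: (@meas_L _ _ _ D Y snd (w \o fst) L (fun t => cL * powR (`|t| + 1) (alpha - 1))) => //.
  - apply: measurable_comp (mw) _ => //.
    exact: measurable_funS measurable_fst.
  - by move=> z [].
  - by move=> t; rewrite mulr_ge0 ?powR_ge0 // ltW.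
  - move=> t y q Yy hq.
    have h1 : `|q| <= `|t| + 1.
      have := ler_normD (q - t) t; rewrite subrK; lra.
    have h2 : `|t| <= `|t| + 1 by lra.
    have := L_lip (`|t| + 1) (addr_ge0 (normr_ge0 _) ler01) y Yy q t h1 h2.
    by [].
have hsup : forall f, H f -> (forall x, `|f x| <= normH ip f) /\ 0 <= supnorm f.
  move=> f' Hf'; have [h1 h2] := supnorm_bd f' X_compact (H_cont f' Hf').
  split => // x; exact: le_trans (h1 x) (H_sup f' Hf').
have alpha0 : 0 <= alpha by case/andP: alpha_bd => a1 _; lra.
have Lbd : forall f, H f -> forall z, D z ->
    0 <= Lcomp L f z <= 1 + powR (normH ip f) alpha.
  move=> f' Hf' [x y] [_ Yy]; rewrite /Lcomp /=.
  rewrite L_ge0 //=; apply: le_trans (L_growth _ _ Yy) _.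
  rewrite lerD2l; apply: powR_mono => //.
  exact: (hsup f' Hf').1.
have intLf : forall f, H f -> P.-integrable D (EFin \o Lcomp L f).
  move=> f' Hf'.
  apply: (le_integrable mD _ _ (finite_measure_integrable_cst P (1 + powR (normH ip f') alpha) mD)).
    by apply/measurable_EFinP; apply: mL; exact: mfH.
  move=> z Dz /=; rewrite lee_fin.
  have /andP[h1 h2] := Lbd f' Hf' z Dz.
  rewrite ger0_norm // ger0_norm //; exact: le_trans h2.
have nH0 : normH ip (fun=> 0) = 0.
  rewrite /normH.
  have := Hlin 1 _ _ _ H0 H0 H0; rewrite !mul1r addr0 => h.
  have -> : ip (fun=> 0) (fun=> 0) = 0 by lra.
  by rewrite sqrtr0.
have Lcomp0 : forall z, D z -> 0 <= Lcomp L (fun=> 0) z <= 1.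
  move=> z Dz; have := Lbd _ H0 z Dz; rewrite nH0 powR0 ?addr0 //.
  by apply: lt0r_neq0; case/andP: alpha_bd => a1 _; lra.
have risk0 : (risk Y L P (fun=> 0%R) <= 1)%E.
  rewrite /risk /Ex.
  have -> : (1 = \int[P]_(z in D) (cst 1 z))%E.
    by rewrite integral_cst // mul1e; apply/esym; exact: P_XY.
  apply: ge0_le_integral => //.
  - by move=> z Dz; rewrite lee_fin; case/andP: (Lcomp0 z Dz).
  - apply/measurable_EFinP; apply: mL; exact: measurable_cst.
  - by move=> z Dz; rewrite lee_fin; case/andP: (Lcomp0 z Dz).
have bayes_le : forall w : BX X -> R, measurable_fun setT w ->
    (bayes_risk Y L P <= risk Y L P w)%E.
  by move=> w mw; apply: ereal_inf_lbound; exists w.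
have risk_ge0 : forall w : X -> R, (0 <= risk Y L P w)%E.
  move=> w; apply: integral_ge0 => -[x y] [_ Yy]; rewrite lee_fin; exact: L_ge0.
have rs_le1 : (risk Y L P fstar <= 1)%E.
  rewrite fstar_min; apply: le_trans (bayes_le (cst 0) (measurable_cst _)) risk0.
set rs := fine (risk Y L P fstar).
have rsE : risk Y L P fstar = rs%:E.
  by rewrite fineK // ge0_fin_numE ?risk_ge0 // (le_lt_trans rs_le1) // ltry.
have intLs : P.-integrable D (EFin \o Lcomp L fstar).
  apply/integrableP; split; first by apply/measurable_EFinP; exact: mL.
  have -> : (\int[P]_(z in D) `|(EFin \o Lcomp L fstar) z| = risk Y L P fstar)%E.
    rewrite /risk /Ex; apply: eq_integral => -[x y]; rewrite inE => -[_ Yy].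
    by rewrite /= ger0_norm // /Lcomp /=; exact: L_ge0.
  by rewrite rsE ltry.
have rE : forall f, H f -> risk Y L P f = (fine (risk Y L P f))%:E.
  move=> f' Hf'; rewrite fineK //; by have := integrable_fin_num mD (intLf f' Hf').
have rsle : forall f, H f -> rs <= fine (risk Y L P f).
  move=> f' Hf'; rewrite -lee_fin -rsE -rE // fstar_min; apply: bayes_le; exact: mfH.
set f0 := fPlam Y L P H ip lam.
have [Hf0 x0le1] : H f0 /\ lam * normH ip f0 ^+ 2 <= 1.
  rewrite /f0 /fPlam.
  case: (pselect (exists f, H f /\ forall g, H g ->
      (reg_risk Y L P ip lam f <= reg_risk Y L P ip lam g)%E)) => [ex|nex].
    have [Hf1 min] := xgetPex (fun=> 0) ex.
    split => //.
    have e0 : lam * 0 ^+ 2 = 0 by rewrite expr2 !mulr0.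
    have := min _ H0; rewrite /reg_risk nH0 e0 add0e => h.
    set f1 := xget _ _ in Hf1 min h *.
    have := le_trans h risk0; rewrite (rE f1 Hf1) -EFinD lee_fin.
    have : 0 <= fine (risk Y L P f1) by rewrite -lee_fin -rE // risk_ge0.
    lra.
  rewrite xgetPN; last by move=> f1 hf1; apply: nex; exists f1.
  by split => //; rewrite nH0 expr2 mulr0 mulr0 ler01.
have lam0 : 0 < lam by case/andP: lam_bd.
set n := normH ip f; set n0 := normH ip f0.
have n_ge0 : 0 <= n by rewrite /n /normH sqrtr_ge0.
have n0_ge0 : 0 <= n0 by rewrite /n0 /normH sqrtr_ge0.
have nf0 : n0 <= (Num.sqrt lam)^-1 by rewrite norm_conv.
have xle1 : lam * n ^+ 2 <= 1 by rewrite -norm_conv.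
set x := lam * n ^+ 2 in xle1 *; set x0 := lam * n0 ^+ 2 in x0le1 *.
have x_ge0 : 0 <= x by rewrite mulr_ge0 ?sqr_ge0 // ltW.
have x0_ge0 : 0 <= x0 by rewrite mulr_ge0 ?sqr_ge0 // ltW.
have nE : n = Num.sqrt (x / lam).
  have -> : x / lam = n ^+ 2 by rewrite /x mulrC mulrA mulVf ?gt_eqF // mul1r.
  by rewrite sqrtr_sqr ger0_norm.
have n0E : n0 = Num.sqrt (x0 / lam).
  have -> : x0 / lam = n0 ^+ 2 by rewrite /x0 mulrC mulrA mulVf ?gt_eqF // mul1r.
  by rewrite sqrtr_sqr ger0_norm.
set r := fine (risk Y L P f); set r0 := fine (risk Y L P f0).
have Eg : Ex Y P (fun z => Ccomp L ip lam f z - Ccomp L ip lam f0 z) =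
    (x - x0 + (r - r0))%:E.
  rewrite /Ex.
  have -> : (fun z => ((Ccomp L ip lam f z - Ccomp L ip lam f0 z))%:E) =
      (fun z => (cst (x - x0)%:E z) + ((EFin \o Lcomp L f) z - (EFin \o Lcomp L f0) z))%E.
    apply: funext => z; rewrite /= -EFinB -EFinD /Ccomp /Lcomp; congr (_%:E).
    rewrite -/n -/n0 -/x -/x0; ring.
  rewrite integralD //.
  - rewrite integral_cst // integralB //; try exact: intLf.
    rewrite [X in (_ * X)%E](_ : _ = 1%E); last exact: P_XY.
    rewrite mule1.
    have := rE f Hf; have := rE f0 Hf0; rewrite /risk /Ex => -> ->.
    by rewrite -/r -/r0 -EFinB -EFinD.
  - by have := finite_measure_integrable_cst P (x - x0) mD.
  - by apply: integrableB => //; exact: intLf.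
have Eh : forall f', H f' ->
    Ex Y P (fun z => Lcomp L f' z - Lcomp L fstar z) = (fine (risk Y L P f') - rs)%:E.
  move=> f' Hf'; rewrite /Ex.
  have -> : (fun z => (Lcomp L f' z - Lcomp L fstar z)%:E) =
      (fun z => ((EFin \o Lcomp L f') z - (EFin \o Lcomp L fstar) z))%E.
    by apply: funext => z; rewrite /= -EFinB.
  rewrite integralB //; last exact: intLf.
  have h1 := rE f' Hf'; have h2 := rsE; rewrite /risk /Ex in h1 h2.
  by rewrite h1 h2 -EFinB.
have aE : approx_err Y L P H ip lam = (x0 + r0 - rs)%:E.
  rewrite /approx_err /reg_risk -/f0 -/n0 -/x0 -fstar_min rsE (rE f0 Hf0) -/r0.
  by rewrite EFinB EFinD.
set hf := fun z : BX X * R => Lcomp L f z - Lcomp L fstar z.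
set hf0 := fun z : BX X * R => Lcomp L f0 z - Lcomp L fstar z.
have mLf := mL f (mfH f Hf).
have mLf0 := mL f0 (mfH f0 Hf0).
have mLs := mL fstar fstar_meas.
have mhf : measurable_fun D hf := measurable_funB mLf mLs.
have mhf0 : measurable_fun D hf0 := measurable_funB mLf0 mLs.
have mhf2 : measurable_fun D (fun z => hf z ^+ 2) := measurable_funX 2 mhf.
have mhf02 : measurable_fun D (fun z => hf0 z ^+ 2) := measurable_funX 2 mhf0.
have Eg2 : (Ex Y P (fun z => ((Ccomp L ip lam f z - Ccomp L ip lam f0 z) ^+ 2)%R) <=
   (2 * (x - x0) ^+ 2)%R%:E + 4%:E * Ex Y P (fun z => (hf z ^+ 2)%R)
   + 4%:E * Ex Y P (fun z => (hf0 z ^+ 2)%R))%E.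
  rewrite /Ex.
  apply: (@le_trans _ _ (\int[P]_(z in D) ((2 * (x - x0) ^+ 2 + 4 * hf z ^+ 2) + 4 * hf0 z ^+ 2)%R%:E)%E).
    apply: ge0_le_integral => //.
    - by move=> z _; rewrite lee_fin sqr_ge0.
    - apply/measurable_EFinP; apply: measurable_funX.
      have -> : (fun z => Ccomp L ip lam f z - Ccomp L ip lam f0 z) =
          (fun z => (x - x0) + (hf z - hf0 z)).
        apply: funext => z; rewrite /Ccomp /hf /hf0 /Lcomp -/n -/n0 -/x -/x0; ring.
      apply: measurable_funD; first exact: measurable_cst.
      exact: measurable_funB.
    - apply/measurable_EFinP; apply: measurable_funD; last exact: measurable_funM.
      by apply: measurable_funD; [exact: measurable_cst | exact: measurable_funM].
    - move=> z Dz; rewrite lee_fin.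
      have -> : Ccomp L ip lam f z - Ccomp L ip lam f0 z = (x - x0) + (hf z - hf0 z).
        rewrite /Ccomp /hf /hf0 /Lcomp -/n -/n0 -/x -/x0; ring.
      set dd := x - x0; set u := hf z; set u0 := hf0 z.
      have : 0 <= (dd - (u - u0)) ^+ 2 by exact: sqr_ge0.
      have : 0 <= (u + u0) ^+ 2 by exact: sqr_ge0.
      rewrite !expr2; nra.
  rewrite int_addR //; first last.
  - exact: measurable_funM.
  - by move=> z _; rewrite mulr_ge0 // sqr_ge0.
  - by apply: measurable_funD; [exact: measurable_cst | exact: measurable_funM].
  - by move=> z _; rewrite addr_ge0 // mulr_ge0 // sqr_ge0.
  rewrite int_addR //; first last.
  - exact: measurable_funM.
  - by move=> z _; rewrite mulr_ge0 // sqr_ge0.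
  - by move=> z _; rewrite mulr_ge0 // sqr_ge0.
  rewrite (int_scaleR P D mD 4 (fun z => hf z ^+ 2)) //; last by move=> z _; rewrite sqr_ge0.
  rewrite (int_scaleR P D mD 4 (fun z => hf0 z ^+ 2)) //; last by move=> z _; rewrite sqr_ge0.
  have -> : (\int[P]_(z in D) (2 * (x - x0) ^+ 2)%R%:E = (2 * (x - x0) ^+ 2)%R%:E)%E.
    have := integral_cst P mD (2 * (x - x0) ^+ 2)%R%:E => /= ->.
    rewrite [X in (_ * X)%E](_ : _ = 1%E); last exact: P_XY.
    by rewrite mule1.
  by [].
have VB1 := variance_bd f Hf nf.
rewrite (Eh f Hf) poweR_EFin -EFinM in VB1.
have VB0 := variance_bd f0 Hf0 nf0.
rewrite (Eh f0 Hf0) poweR_EFin -EFinM in VB0.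
rewrite Eg aE.
set e := x - x0 + (r - r0).
set a := x0 + r0 - rs.
have -> : ((16 * c)%:E *
  ((e%:E * (lam^-1)%:E) `^ 2^-1 + ((a%:E * (lam^-1)%:E) `^ 2^-1) + 1) `^ v *
  (e%:E `^ theta + 2 * a%:E `^ theta) =
  (16 * c * powR (powR (e / lam) (2^-1) + powR (a / lam) (2^-1) + 1) v *
   (powR e theta + 2 * powR a theta))%:E)%E.
  by rewrite !EFinM !EFinD !poweR_EFin -/e -/a EFinM.
apply: le_trans Eg2 _.
set K1 := c * powR (supnorm f + 1) v * powR (r - rs) theta.
set K0 := c * powR (supnorm f0 + 1) v * powR (r0 - rs) theta.
apply: (@le_trans _ _ ((2 * (x - x0) ^+ 2)%R%:E + 4%:E * K1%:E + 4%:E * K0%:E)%E).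
  apply: leeD; first apply: leeD => //.
    by apply: lee_wpmul2l; [exact: lee0n | exact: VB1].
  by apply: lee_wpmul2l; [exact: lee0n | exact: VB0].
rewrite -!EFinM -!EFinD lee_fin.
have hx : 0 <= x <= 1 by rewrite x_ge0 xle1.
have hx0 : 0 <= x0 <= 1 by rewrite x0_ge0 x0le1.
have hs1 : supnorm f <= Num.sqrt (x / lam) by rewrite -nE; exact: H_sup.
have hs0 : supnorm f0 <= Num.sqrt (x0 / lam) by rewrite -n0E; exact: H_sup.
exact: (@final_ineq R x x0 r r0 rs (supnorm f) (supnorm f0) lam c v theta K1 K0
  lam0 c_ge1 v_ge0 theta_bd hx hx0 (rsle f Hf) (rsle f0 Hf0)
  (hsup f Hf).2 hs1 (hsup f0 Hf0).2 hs0 (le_refl _) (le_refl _)).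
Qed.
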